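(* The abelian group $\ell^\infty(\mathbb{Z})_S$ is divisible: for every $a\in\ell^\infty(\mathbb{Z})$ and every integer $n\ge1$ there exist $b,c\in\ell^\infty(\mathbb{Z})$ with $a-nb=c-Sc$.
   Context: $\ell^\infty(\mathbb{Z})$ denotes the abelian group of bounded integer-valued sequences $(a_j)_{j\in\mathbb{Z}}$, $S(a_j)_j=(a_{j+1})_j$ is the shift, and $\ell^\infty(\mathbb{Z})_S=\ell^\infty(\mathbb{Z})/\{a-Sa: a\in\ell^\infty(\mathbb{Z})\}$. *)

(* Defs.v *)
From Stdlib Require Import ZArith.
Open Scope Z_scope.

Definition bounded (a : Z -> Z) : Prop :=
  exists M : Z, forall j : Z, Z.abs (a j) <= M.

Definition seq_shift (a : Z -> Z) : Z -> Z := fun j => a (j + 1).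

(* Main.v *)
Require Import Defs.
From Stdlib Require Import ZArith Lia.
Open Scope Z_scope.

Section S.
Variable a : Z -> Z.
Fixpoint fp (m : nat) : Z := match m with O => 0 | S m' => fp m' + a (Z.of_nat m') end.
Fixpoint fn (m : nat) : Z := match m with O => 0 | S m' => fn m' + a (- Z.of_nat m' - 1) end.
Definition ps (j : Z) : Z := if Z.leb 0 j then fp (Z.to_nat j) else - fn (Z.to_nat (- j)).

Lemma ps_step j : ps (j + 1) - ps j = a j.
Proof.
  unfold ps. destruct (Z.leb_spec 0 j).
  - destruct (Z.leb_spec 0 (j+1)); [|lia].
    replace (Z.to_nat (j+1)) with (S (Z.to_nat j)) by lia. simpl.
    rewrite Z2Nat.id by lia. lia.
  - destruct (Z.leb_spec 0 (j+1)).
    + assert (j = -1) by lia. subst. simpl. lia.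
    + replace (Z.to_nat (- j)) with (S (Z.to_nat (- (j+1)))) by lia. simpl.
      rewrite Z2Nat.id by lia. replace (- (- (j + 1)) - 1) with j by lia. lia.
Qed.
End S.

Theorem lemma5p1 :
  forall (a : Z -> Z) (n : Z), bounded a -> 1 <= n ->
  exists (b c : Z -> Z), bounded b /\ bounded c /\
    forall j : Z, a j - n * b j = c j - seq_shift c j.
Proof.
  intros a n [M HM] Hn.
  exists (fun j => ps a (j+1) / n - ps a j / n), (fun j => - (ps a j mod n)).
  split; [|split].
  - exists (M + n). intros j.
    pose proof (ps_step a j) as E.
    pose proof (Z.div_mod (ps a (j+1)) n ltac:(lia)).
    pose proof (Z.div_mod (ps a j) n ltac:(lia)).
    pose proof (Z.mod_pos_bound (ps a (j+1)) n ltac:(lia)).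
    pose proof (Z.mod_pos_bound (ps a j) n ltac:(lia)).
    pose proof (HM j).
    set (q1 := ps a (j+1) / n) in *. set (q0 := ps a j / n) in *.
    set (r1 := ps a (j+1) mod n) in *. set (r0 := ps a j mod n) in *.
    assert (n * (q1 - q0) = a j - r1 + r0) by lia.
    destruct (Z.abs_spec (q1 - q0)); destruct (Z.abs_spec (a j)); nia.
  - exists n. intros j. pose proof (Z.mod_pos_bound (ps a j) n ltac:(lia)). lia.
  - intros j. unfold seq_shift.
    pose proof (ps_step a j) as E.
    pose proof (Z.div_mod (ps a (j+1)) n ltac:(lia)).
    pose proof (Z.div_mod (ps a j) n ltac:(lia)).
    lia.
Qed.
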